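(* For $A,x\in\mathbb{R}$ define $E_0(A,x):=1$, $E_1(A,x):=e^{(1-x)A}$ and, for $n\ge2$, \[ E_n(A,x):=\begin{cases} \exp\!\Big(\big[x(E_1+E_3+\cdots+E_{n-1})-\tfrac n2\big]A\Big), & n \text{ even},\\[4pt] \exp\!\Big(\big[\tfrac{n+1}{2}-x(E_0+E_2+\cdots+E_{n-1})\big]A\Big), & n\text{ odd},\end{cases} \] with all $E_j$ evaluated at $(A,x)$. Define $\varphi_1(A,x):=x-1$, $\varphi_n(A,x):=\varphi_{n-1}(A,x)-1+xE_{n-1}(A,x)$ for $n\ge2$, and the polynomial $p_n(A):=\frac{\partial\varphi_n}{\partial x}(A,1)$. Then: (i) for every $n\ge2$, the positive roots of $p_{2n}$ are separated by the positive roots of $p_{2n-1}$, and the positive roots of $p_{2n+1}$ are separated by the positive roots of $p_{2n}$ that are less than $2$; (ii) for every $n\ge1$, the even polynomials $\frac{p_{2n}(A)}{2-A}$ and $p_{2n-1}(A)$ each have exactly $n-1$ positive roots; consequently, since they are even of degree $2n-2$, they also have $n-1$ negative roots, and all their roots are real and simple.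
   Context: Given two finite sets $R_1,R_2\subset\mathbb{R}$ (here, sets of roots), ''$R_1$ is separated by $R_2$'' means: all elements of $R_2$ lie between the minimal and maximal elements of $R_1$, and between any two consecutive elements of $R_2$ there... more precisely, any interval formed by a pair of consecutive elements of $R_1$ contains exactly one element of $R_2$ (i.e. the elements of $R_1$ and $R_2$ interlace, with $R_1$ having the extreme elements). For $n\ge1$, $2-A$ divides $p_{2n}(A)$, so $\frac{p_{2n}(A)}{2-A}$ is a polynomial. *)

(* Defs.v *)
From HB Require Import structures.
From mathcomp Require Import all_boot all_order all_algebra.
From mathcomp Require Import all_classical all_reals all_analysis.
Set Implicit Arguments. Unset Strict Implicit. Unset Printing Implicit Defensive.
Import Order.TTheory GRing.Theory Num.Theory.
Local Open Scope classical_set_scope.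
Local Open Scope ring_scope.

Section Defs.
Variable R : realType.

(* The value E_k(A,x), given f j = E_j(A,x) for all j < k. *)
Definition Enew (A x : R) (f : nat -> R) (k : nat) : R :=
  if k == 1%N then expR ((1 - x) * A)
  else if odd k then
    expR (((k.+1)%:R / 2 - x * \sum_(j < k | ~~ odd j) f j) * A)
  else
    expR ((x * \sum_(j < k | odd j) f j - k%:R / 2) * A).

(* Ef A x n k = E_k(A,x) for all k <= n. *)
Fixpoint Ef (A x : R) (n : nat) : nat -> R :=
  match n with
  | 0 => fun _ => 1
  | m.+1 => let f := Ef A x m in
            fun k => if (k <= m)%N then f k else Enew A x f m.+1
  end.

Definition Ecoef (n : nat) (A x : R) : R := Ef A x n n.

(* phi_n(A,x), n >= 1 (phi 0 is an unused junk value) *)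
Fixpoint phi (n : nat) (A x : R) : R :=
  match n with
  | 0 => 0
  | 1 => x - 1
  | (m.+1 as k).+1 => phi k A x - 1 + x * Ecoef k A x
  end.

Definition pn (n : nat) (A : R) : R := derive1 (fun x => phi n A x) 1.

Definition roots_separated (R1 R2 : set R) : Prop :=
  exists s1 s2 : seq R,
    [/\ sorted <%R s1, sorted <%R s2,
        R1 = [set x | x \in s1] /\ R2 = [set x | x \in s2],
        size s2 = (size s1).-1 &
        (forall i, (i.+1 < size s1)%N -> s1`_i < s2`_i < s1`_i.+1)].

Definition nroots_in (q : {poly R}) (P : R -> Prop) (k : nat) : Prop :=
  exists s : seq R, [/\ uniq s, (forall x, x \in s <-> (P x /\ root q x)) & size s = k].

Definition real_simple_roots (q : {poly R}) : Prop :=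
  exists s : seq R, uniq s /\ q = lead_coef q *: \prod_(r <- s) ('X - r%:P).

Definition part_ii_props (n : nat) (q : {poly R}) : Prop :=
  [/\ (forall A, q.[- A] = q.[A]),
      size q = (2 * n - 1)%N,                      (* degree 2n-2 *)
      nroots_in q (fun A => 0 < A) n.-1,
      nroots_in q (fun A => A < 0) n.-1
    & real_simple_roots q].

End Defs.

(* Main.v *)
Require Import Defs.
From HB Require Import structures.
From mathcomp Require Import all_boot all_order all_algebra.
From mathcomp Require Import all_classical all_reals all_analysis.
From mathcomp Require Import ring lra zify.
Import Order.TTheory GRing.Theory Num.Theory.
Local Open Scope classical_set_scope.
Local Open Scope ring_scope.

Section S.
Context {R : realType}.

Fixpoint dpair (m : nat) : {poly R} * {poly R} :=
  match m with
  | 0 => (0, 1)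
  | m'.+1 => ((dpair m').2, (2%:P - 'X^2) * (dpair m').2 - (dpair m').1)
  end.
Definition dd m := (dpair m).1.
Lemma dd0 : dd 0 = 0. Proof. by []. Qed.
Lemma dd1 : dd 1 = 1. Proof. by []. Qed.
Lemma ddSS m : dd m.+2 = (2%:P - 'X^2) * dd m.+1 - dd m.
Proof. by []. Qed.

Definition PP n := if odd n then dd n./2.+1 + dd n./2 else (2%:P - 'X) * dd n./2.
Definition aa k := PP k.+1 - PP k.

Lemma PP_even m : PP m.*2 = (2%:P - 'X) * dd m.
Proof. by rewrite /PP odd_double doubleK. Qed.
Lemma PP_odd m : PP m.*2.+1 = dd m.+1 + dd m.
Proof. by rewrite /PP /= odd_double /= uphalf_double. Qed.

Lemma sum_recr (V : nmodType) (P : pred nat) (F : nat -> V) k :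
  \sum_(j < k.+1 | P j) F j = \sum_(j < k | P j) F j + (if P k then F k else 0).
Proof. by rewrite big_mkcond big_ord_recr /= -big_mkcond. Qed.

Lemma sum_recr_odd (F : nat -> R) k :
  \sum_(j < k.+1 | odd j) F j = \sum_(j < k | odd j) F j + (if odd k then F k else 0).
Proof. exact: (@sum_recr _ odd F k). Qed.
Lemma sum_recr_even (F : nat -> R) k :
  \sum_(j < k.+1 | ~~ odd j) F j = \sum_(j < k | ~~ odd j) F j + (if ~~ odd k then F k else 0).
Proof. exact: (@sum_recr _ (fun j => ~~ odd j) F k). Qed.
Lemma sum_eo m A : A * \sum_(j < m.*2 | odd j) (aa j).[A] = (aa m.*2).[A] - 1
  /\ - A * \sum_(j < m.*2.+1 | ~~ odd j) (aa j).[A] = (aa m.*2.+1).[A] - 1.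
Proof.
pose F := fun j => (aa j).[A].
have -> : forall k, \sum_(j < k | odd j) (aa j).[A] = \sum_(j < k | odd j) F j by [].
have -> : forall k, \sum_(j < k | ~~ odd j) (aa j).[A] = \sum_(j < k | ~~ odd j) F j by [].
elim: m => [|m [IHe IHo]].
  rewrite sum_recr_even !big_ord0 /F /aa /= (PP_odd 0) (PP_even 0) (PP_even 1) dd0 dd1 !hornerE.
  split; ring.
split.
  rewrite doubleS 2!sum_recr_odd /= odd_double /= addr0 mulrDr IHe.
  rewrite /F /aa -doubleS !PP_odd !PP_even ddSS.
  rewrite !hornerE; ring.
rewrite doubleS 2!sum_recr_even /= odd_double /= addr0 mulrDr IHo.
rewrite /F /aa -!doubleS !PP_odd !PP_even !ddSS.
rewrite !hornerE; ring.
Qed.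

Lemma aa0 A : (aa 0).[A] = 1.
Proof. by rewrite /aa (PP_odd 0) (PP_even 0) dd0 dd1 !hornerE; ring. Qed.
Lemma aa1 A : (aa 1).[A] = 1 - A.
Proof. by rewrite /aa (PP_odd 0) (PP_even 1) dd0 dd1 !hornerE; ring. Qed.

Lemma Ef_Ecoef (A x : R) n k : (k <= n)%N -> Ef A x n k = Ecoef k A x.
Proof.
elim: n k => [|n IH] k; first by rewrite leqn0 => /eqP ->.
rewrite leq_eqVlt => /orP[/eqP -> //|]; rewrite ltnS => kn /=; rewrite kn; exact: IH.
Qed.

Lemma Enew_ext (A x : R) f g k : (forall j, (j < k)%N -> f j = g j) -> Enew A x f k = Enew A x g k.
Proof.
move=> fg; rewrite /Enew.
have h : forall P : pred nat, \sum_(j < k | P j) f j = \sum_(j < k | P j) g j.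
  by move=> P; apply: eq_bigr => j _; exact: fg.
by rewrite (h odd) (h (fun j => ~~ odd j)).
Qed.

Lemma EcoefS (A x : R) k : Ecoef k.+1 A x = Enew A x (fun j => Ecoef j A x) k.+1.
Proof.
rewrite /Ecoef /= ltnn; apply: Enew_ext => j; rewrite ltnS; exact: Ef_Ecoef.
Qed.

Lemma is_derive_sumP (P : pred nat) (h : nat -> R -> R) (dh : nat -> R) k :
  (forall j, (j < k)%N -> P j -> is_derive (1:R) (1:R) (h j) (dh j)) ->
  is_derive (1:R) (1:R) (fun x => \sum_(j < k | P j) h j x) (\sum_(j < k | P j) dh j).
Proof.
elim: k => [|k IH] H.
  have -> : (fun x => \sum_(j < 0 | P j) h j x) = cst 0.
    by apply/funext => x; rewrite big_ord0.
  rewrite big_ord0; exact: is_derive_cst.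
have -> : (fun x => \sum_(j < k.+1 | P j) h j x) =
    (fun x => \sum_(j < k | P j) h j x + (if P k then h k x else 0)).
  by apply/funext => x; rewrite (@sum_recr _ P (fun j => h j x)).
rewrite (@sum_recr _ P dh).
have IH' := IH (fun j jk => H j (ltnW jk)).
case Pk: (P k).
  have Hk := H k (ltnSn k) Pk.
  by apply: is_derive_eq.
by apply: is_derive_eq; rewrite addr0.
Qed.

Lemma cnt_odd m : \sum_(j < m.*2 | odd j) (1:R) = m%:R.
Proof.
elim: m => [|m IH]; first by rewrite big_ord0.
rewrite doubleS 2!(@sum_recr _ odd (fun _ => 1)) /= odd_double /= addr0 IH.
by rewrite -natr1.
Qed.
Lemma cnt_even m : \sum_(j < m.*2.+1 | ~~ odd j) (1:R) = m.+1%:R.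
Proof.
elim: m => [|m IH]; first by rewrite (@sum_recr _ (fun j => ~~ odd j) (fun _ => 1)) big_ord0 /= add0r.
rewrite doubleS 2!(@sum_recr _ (fun j => ~~ odd j) (fun _ => 1)) /= odd_double /= addr0 IH.
by rewrite -[in RHS]natr1.
Qed.

Lemma Ederiv (A : R) k : Ecoef k A 1 = 1 /\
  is_derive (1:R) (1:R) (fun x => Ecoef k A x) ((aa k).[A] - 1).
Proof.
elim/ltn_ind: k => k IH.
have [m [km|km]] : exists m, k = m.*2 \/ k = m.*2.+1.
  exists k./2; rewrite -{1 3}(odd_double_half k); case: (odd k); [right|left] => //.
- subst k. case: m IH => [|m] IH.
    split; first by [].
    have -> : (fun x => Ecoef 0 A x) = cst 1 by [].
    by apply: is_derive_eq; rewrite aa0 subrr.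
  rewrite doubleS in IH *.
  have fE : (fun x => Ecoef m.*2.+2 A x) = (fun x =>
     expR ((x * \sum_(j < m.*2.+2 | odd j) Ecoef j A x - (m.*2.+2)%:R / 2) * A)).
    by apply/funext => x; rewrite EcoefS /Enew /= odd_double.
  have S1 : \sum_(j < m.*2.+2 | odd j) Ecoef j A 1 = \sum_(j < m.*2.+2 | odd j) (1:R).
    by apply: eq_bigr => j _; exact: (IH j (ltn_ord j)).1.
  have c : (m.*2.+2)%:R / 2 = \sum_(j < m.*2.+2 | odd j) (1:R).
    by rewrite -doubleS cnt_odd -muln2 natrM mulfK // pnatr_eq0.
  have dS := @is_derive_sumP odd (fun j x => Ecoef j A x) (fun j => (aa j).[A] - 1) m.*2.+2
     (fun j jk _ => (IH j jk).2).
  rewrite /= in dS.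
  split.
    by rewrite (congr1 (fun f => f 1) fE) /= S1 c mul1r subrr mul0r expR0.
  rewrite fE.
  apply: is_derive_eq.
  rewrite S1 c mul1r subrr mul0r expR0 mul1r.
  have sE : forall a b : R, a *: b = a * b by [].
  rewrite !sE mul0r add0r mul1r mulr1 subr0 -big_split /=.
  have := (sum_eo m.+1 A).1; rewrite doubleS => <-.
  by congr (_ * _); apply: eq_bigr => j _; rewrite subrK.
- subst k. case: m IH => [|m] IH.
    have fE : (fun x => Ecoef 1 A x) = (fun x => expR ((1 - x) * A)) by [].
    split; first by rewrite (congr1 (fun f => f 1) fE) /= subrr mul0r expR0.
    rewrite fE; apply: is_derive_eq.
    have sE : forall a b : R, a *: b = a * b by [].
    rewrite !sE subrr mul0r expR0 aa1. ring.
  rewrite doubleS in IH *.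
  have fE : (fun x => Ecoef m.*2.+3 A x) = (fun x =>
     expR (((m.*2.+4)%:R / 2 - x * \sum_(j < m.*2.+3 | ~~ odd j) Ecoef j A x) * A)).
    by apply/funext => x; rewrite EcoefS /Enew /= odd_double.
  have S1 : \sum_(j < m.*2.+3 | ~~ odd j) Ecoef j A 1 = \sum_(j < m.*2.+3 | ~~ odd j) (1:R).
    by apply: eq_bigr => j _; exact: (IH j (ltn_ord j)).1.
  have c : (m.*2.+4)%:R / 2 = \sum_(j < m.*2.+3 | ~~ odd j) (1:R).
    by rewrite -!doubleS cnt_even -muln2 natrM mulfK // pnatr_eq0.
  have dS := @is_derive_sumP (fun j => ~~ odd j) (fun j x => Ecoef j A x) (fun j => (aa j).[A] - 1) m.*2.+3
     (fun j jk _ => (IH j jk).2).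
  rewrite /= in dS.
  split.
    by rewrite (congr1 (fun f => f 1) fE) /= S1 c mul1r subrr mul0r expR0.
  rewrite fE.
  apply: is_derive_eq.
  rewrite S1 c mul1r subrr mul0r expR0 mul1r.
  have sE : forall a b : R, a *: b = a * b by [].
  rewrite !sE mul0r add0r add0r !mul1r mulr1 -big_split /=.
  have := (sum_eo m.+1 A).2; rewrite doubleS => <-.
  rewrite mulrN -mulNr; congr (_ * _); apply: eq_bigr => j _; rewrite subrK.
  by [].
Qed.

Lemma phi_deriv (A : R) n : (1 <= n)%N ->
  is_derive (1:R) (1:R) (fun x => phi n A x) (PP n).[A].
Proof.
case: n => [//|n] _; elim: n => [|n IH].
  have -> : (fun x => phi 1 A x) = (fun x => x - 1) by [].
  by apply: is_derive_eq; rewrite (PP_odd 0) dd0 dd1 !hornerE subr0.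
have -> : (fun x => phi n.+2 A x) = (fun x => phi n.+1 A x - 1 + x * Ecoef n.+1 A x) by [].
have [E1 dE] := Ederiv A n.+1.
apply: is_derive_eq.
have sE : forall a b : R, a *: b = a * b by [].
rewrite !sE E1 subr0 mul1r mulr1 /aa !hornerE.
by rewrite /=; lra.
Qed.

Lemma pnE n (A : R) : (1 <= n)%N -> pn n A = (PP n).[A].
Proof.
move=> n1; rewrite /pn derive1E; have := @phi_deriv A n n1; by case.
Qed.
End S.

Section S.
Context {R : realType}.

Lemma dd_even m (A : R) : (dd m).[- A] = (dd m).[A].
Proof.
suff : (dd m).[- A] = (dd m).[A] /\ (dd m.+1).[- A] = (dd m.+1).[A] by case.
elim: m => [|m [IH1 IH2]]; first by rewrite dd0 dd1 !hornerE.
split => //; rewrite ddSS !hornerE IH1 IH2; ring.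
Qed.

Lemma dd_at0 m : (dd m).[0 : R] = m%:R.
Proof.
suff : (dd m).[0 : R] = m%:R /\ (dd m.+1).[0 : R] = m.+1%:R by case.
elim: m => [|m [IH1 IH2]]; first by rewrite dd0 dd1 !hornerE.
split => //; rewrite ddSS !hornerE IH1 IH2 -!natr1; ring.
Qed.

Lemma size_dd m : (size (dd m : {poly R}) <= (m.*2).-1)%N.
Proof.
suff : (size (dd m : {poly R}) <= (m.*2).-1)%N /\ (size (dd m.+1 : {poly R}) <= (m.+1.*2).-1)%N by case.
elim: m => [|m [IH1 IH2]]; first by rewrite dd0 dd1 size_poly0 size_poly1.
split => //; rewrite ddSS.
have h2 : (size ((2%:P - 'X^2)%R : {poly R}) <= 3)%N.
  apply: leq_trans (size_polyD _ _) _; rewrite size_polyN size_polyXn geq_max andbT.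
  exact: leq_trans (size_polyC_leq1 _) _.
apply: leq_trans (size_polyD _ _) _; rewrite size_polyN geq_max; apply/andP; split.
  apply: leq_trans (size_polyMleq _ _) _.
  move: IH2 h2; rewrite !doubleS /=; lia.
apply: leq_trans IH1 _; apply: leq_trans (leq_pred _) _; rewrite !doubleS /=; lia.
Qed.
End S.

Section S.
Context {R : realType}.

Lemma part_ii_gen n (q : {poly R}) (s : seq R) :
  (forall A, q.[- A] = q.[A]) -> q.[0] != 0 -> (size q <= (2 * n - 1))%N ->
  size s = n.-1 -> uniq s ->
  (forall x, x \in s -> 0 < x /\ root q x) ->
  part_ii_props n q /\ (forall x, 0 < x -> root q x -> x \in s).
Proof.
move=> qe q0n hq ss us hs.
have q0 : q != 0 by apply: contraNneq q0n => ->; rewrite horner0.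
have rootN x : root q (- x) = root q x by rewrite /root qe.
pose t := s ++ map -%R s.
have ut : uniq t.
  rewrite cat_uniq us (map_inj_uniq (@oppr_inj _)) us andbT /=.
  apply/hasPn => x /mapP [y ys ->]; apply/negP => /hs [h _].
  have [h' _] := hs y ys; clear -h h'; lra.
have rt : all (root q) t.
  apply/allP => x; rewrite mem_cat => /orP [/hs [] //| /mapP [y /hs [_ ry] ->]].
  by rewrite rootN.
have hsz := max_poly_roots q0 rt ut.
rewrite size_cat size_map ss in hsz.
have sq : size q = (2 * n - 1)%N.
  move: hsz hq; case: (n) => [|k] /=; move: (size q) => z; clear; lia.
have n1 : (0 < n)%N by move: hsz hq; case: (n) => [|k] /=; move: (size q) => z; clear; lia.
have char : forall x, 0 < x -> root q x -> x \in s.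
  move=> x x0 rx; apply/negPn/negP => xs.
  have ut' : uniq (x :: t).
    rewrite /= ut andbT mem_cat negb_or xs /=; apply/mapP => [[y /hs [y0 _] xy]]; clear -x0 y0 xy; lra.
  have rt' : all (root q) (x :: t) by rewrite /= rx.
  have := max_poly_roots q0 rt' ut'; rewrite /= size_cat size_map ss sq; case: (n) => [|k] /=; clear; lia.
split => //; split => //.
- exists s; split => // x; split; [by move/hs|by case=> /char h /h].
- exists (map -%R s); split => //; last by rewrite size_map.
  + by rewrite (map_inj_uniq (@oppr_inj _)).
  + move=> x; split.
      move=> /mapP [y /hs [y0 ry] ->]; split; [clear -y0; lra| by rewrite rootN].
    case=> x0 rx; apply/mapP; exists (- x); last by rewrite opprK.
    apply: char; [clear -x0; lra| by rewrite rootN].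
- exists t; split => //; apply: all_roots_prod_XsubC => //.
    by rewrite sq size_cat size_map ss; move: n1; case: (n) => [|k] /=; clear; lia.
  by rewrite uniq_rootsE.
Qed.
End S.

Section S.
Context {R : realType}.

Definition ang (a b : nat) : R := a%:R / b%:R * pi.

Lemma ang_lt a b c d : (0 < b)%N -> (0 < d)%N -> (a * d < c * b)%N -> ang a b < ang c d.
Proof.
move=> b0 d0 h; rewrite /ang ltr_pM2r ?pi_gt0 // ltr_pdivrMr ?ltr0n //.
by rewrite mulrAC ltr_pdivlMr ?ltr0n // -!natrM ltr_nat.
Qed.

Lemma ang_ge0 a b : 0 <= ang a b.
Proof. by rewrite /ang mulr_ge0 ?pi_ge0 // divr_ge0. Qed.

Lemma ang_le_pi a b : (a <= b)%N -> (0 < b)%N -> ang a b <= pi.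
Proof.
move=> ab b0; rewrite /ang -[leRHS]mul1r ler_wpM2r ?pi_ge0 //.
by rewrite ler_pdivrMr ?ltr0n // mul1r ler_nat.
Qed.

Lemma cos_ang_lt a b c d : (0 < b)%N -> (0 < d)%N -> (a <= b)%N -> (c <= d)%N ->
  (c * b < a * d)%N -> cos (ang a b) < cos (ang c d).
Proof.
move=> b0 d0 ab cd h.
rewrite ltr_cos ?in_itv /= ?ang_ge0 ?ang_le_pi //; exact: ang_lt.
Qed.

Lemma ang0 b : ang 0 b = 0.
Proof. by rewrite /ang mul0r mul0r. Qed.

Lemma cos_ang_lt1 a b : (0 < a <= b)%N -> cos (ang a b) < 1.
Proof.
case/andP => a0 ab; rewrite -cos0 -(ang0 1); apply: cos_ang_lt => //; first by lia.
by rewrite mul0n muln1.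
Qed.

Lemma cos_ang_gt0 a b : (a.*2 < b)%N -> 0 < cos (ang a b).
Proof.
move=> h; apply: cos_gt0_pihalf.
have p0 := pi_gt0 R.
have h1 : ang a b < pi / 2.
  have -> : pi / 2 = ang 1 2 :> R by rewrite /ang mul1r mulrC.
  apply: ang_lt => //; first by lia.
  by rewrite muln2 mul1n.
have := ang_ge0 a b; move: h1; clear; lra.
Qed.

Lemma sin_id y p : sin (y + p) + sin (y - p) = 2 * cos p * sin y :> R.
Proof. rewrite sinD sinB; ring. Qed.
Lemma cos_id y p : cos (y + p) + cos (y - p) = 2 * cos p * cos y :> R.
Proof. rewrite cosD cosB; ring. Qed.

Lemma cheb_gen (f : R -> R) (phi y0 K : R) (s : nat -> R) :
  (forall y, f (y + phi) + f (y - phi) = 2 * cos phi * f y) ->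
  (forall m, s m.+2 = - (2 * cos phi) * s m.+1 - s m) ->
  s 0%N * K = f y0 -> s 1%N * K = - f (y0 + phi) ->
  forall m, s m * K = (-1) ^+ m * f (y0 + phi *+ m).
Proof.
move=> hf hs h0 h1 m.
suff : s m * K = (-1) ^+ m * f (y0 + phi *+ m) /\
       s m.+1 * K = (-1) ^+ m.+1 * f (y0 + phi *+ m.+1) by case.
elim: m => [|m [IH1 IH2]].
  by rewrite expr0 mulr0n addr0 mul1r h0 expr1 mulr1n mulN1r h1.
split => //.
have e := hf (y0 + phi *+ m.+1).
rewrite -addrA -mulrSr in e.
have e2 : y0 + phi *+ m.+1 - phi = y0 + phi *+ m by rewrite mulrSr addrA addrK.
rewrite e2 in e.
have -> : f (y0 + phi *+ m.+2) = 2 * cos phi * f (y0 + phi *+ m.+1) - f (y0 + phi *+ m).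
  by rewrite -e; ring.
rewrite hs mulrBl -(mulrA _ (s m.+1)) IH2 IH1 !exprS; ring.
Qed.

Lemma two_cos2 (t : R) : 2 - (2 * cos t) ^+ 2 = - (2 * cos (t *+ 2)).
Proof. rewrite cos_mulr2n; ring. Qed.

Lemma dd_trig (t : R) m : (dd m).[2 * cos t] * (- sin (t *+ 2)) = (-1) ^+ m * sin (t *+ 2 *+ m).
Proof.
rewrite -[t *+ 2 *+ m]add0r.
apply: (@cheb_gen sin (t *+ 2) 0 (- sin (t *+ 2)) (fun m => (dd m).[2 * cos t]) (fun y => sin_id y _)).
- by move=> k; rewrite ddSS !hornerE -two_cos2.
- by rewrite dd0 horner0 mul0r sin0.
- by rewrite dd1 hornerC mul1r add0r.
Qed.

Lemma cc_trig (t : R) m : (dd m.+1 + dd m).[2 * cos t] * cos t = (-1) ^+ m * cos (t + t *+ 2 *+ m).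
Proof.
apply: (@cheb_gen cos (t *+ 2) t (cos t) (fun m => (dd m.+1 + dd m).[2 * cos t]) (fun y => cos_id y _)).
- move=> k; rewrite (ddSS k.+1) ddSS !hornerE -two_cos2 /=; ring.
- by rewrite dd1 dd0 addr0 hornerC mul1r.
- rewrite ddSS dd1 dd0 !hornerE cosD cos_mulr2n sin_mulr2n.
  have -> : cos t * sin t *+ 2 * sin t = (cos t * sin t ^+ 2) *+ 2 by ring.
  rewrite sin2cos2; ring.
Qed.
End S.

Section S.
Context {R : realType}.

Lemma sin_pinat j : sin (pi *+ j) = 0 :> R.
Proof. by have := alternatingn (@sinDpi R) j 0; rewrite add0r sin0 mulr0. Qed.

Lemma dd_root n j : (0 < j < n)%N -> root (dd n) (2 * cos (ang j n.*2) : R).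
Proof.
case/andP => j0 jn; set t := ang j n.*2.
have h := dd_trig t n.
have n0 : (n.*2)%:R != 0 :> R by rewrite pnatr_eq0 -lt0n double_gt0; lia.
have e1 : t *+ 2 *+ n = pi *+ j.
  rewrite -mulrnA mul2n /t /ang -mulr_natr -[pi *+ j]mulr_natr; field => //.
rewrite e1 sin_pinat mulr0 in h.
have e2 : t *+ 2 = ang j n.
  rewrite /t /ang -mulr_natr -[n.*2]muln2 natrM; field.
  by rewrite pnatr_eq0 -lt0n; lia.
have s0 : 0 < sin (t *+ 2).
  rewrite e2; apply: sin_gt0_pi; apply/andP; split.
    rewrite -(ang0 n); apply: ang_lt; nia.
  have -> : pi = ang 1 1 :> R by rewrite /ang divr1 mul1r.
  apply: ang_lt; nia.
move/eqP: h; rewrite mulf_eq0 oppr_eq0 (gt_eqF s0) orbF. by [].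
Qed.

Lemma cos_pihalf_nat k : cos (pi / 2 + pi *+ k) = 0 :> R.
Proof. by have := alternatingn (@cosDpi R) k (pi / 2); rewrite cos_pihalf mulr0. Qed.

Lemma cc_root n j : (0 < j < n)%N ->
  root (dd n + dd n.-1) (2 * cos (ang (j.*2.-1) ((n.*2.-1).*2)) : R).
Proof.
case: n => [|m]; first by case/andP => _; rewrite ltn0.
case: j => [//|k] /andP [_ km]; rewrite ltnS in km.
have -> : (k.+1.*2.-1 = k.*2.+1)%N by rewrite doubleS.
have -> : (m.+1.*2.-1 = m.*2.+1)%N by rewrite doubleS.
rewrite /=.
set t := ang _ _.
have h := cc_trig t m.
have e1 : t + t *+ 2 *+ m = pi / 2 + pi *+ k.
  rewrite -mulrnA mul2n -mulrS /t /ang -mulr_natr -[pi *+ k]mulr_natr.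
  rewrite -[((m.*2).+1).*2]muln2 -[k.*2]muln2 -[m.*2]muln2 !natrM -!natr1 natrM.
  field; by rewrite -natrM natr1 pnatr_eq0.
rewrite e1 cos_pihalf_nat mulr0 in h.
have c0 : 0 < cos t by apply: cos_ang_gt0; lia.
by move/eqP: h; rewrite mulf_eq0 (gt_eqF c0) orbF.
Qed.
End S.

Section S.
Context {R : realType}.

Definition fd n i : R := 2 * cos (ang (n.-1 - i) n.*2).
Definition fc n i : R := 2 * cos (ang ((n.-1 - i).*2.-1) ((n.*2.-1).*2)).

Lemma sorted_mkseq (f : nat -> R) k : (forall i, (i.+1 < k)%N -> f i < f i.+1) ->
  sorted <%R (mkseq f k).
Proof.
move=> hf; apply/(sortedP 0) => i; rewrite size_mkseq => h.
rewrite !nth_mkseq //; [exact: hf | exact: ltnW].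
Qed.

Lemma mem_mkseqP (f : nat -> R) k x : x \in mkseq f k <-> exists2 i, (i < k)%N & x = f i.
Proof.
split; first by move/mapP => [i]; rewrite mem_iota => /andP [_ ik] ->; exists i.
by move=> [i ik ->]; apply/mapP; exists i => //; rewrite mem_iota.
Qed.

Lemma fd_lt n i : (i.+1 < n)%N -> fd n i < fd n i.+1.
Proof.
move=> h; rewrite /fd ltr_pM2l // cos_ang_lt //; nia.
Qed.

Lemma fc_lt n i : (i.+2 < n)%N -> fc n i < fc n i.+1.
Proof.
move=> h; rewrite /fc ltr_pM2l // cos_ang_lt //; nia.
Qed.

Lemma fd_props n i : (i < n.-1)%N -> 0 < fd n i /\ root (dd n) (fd n i) /\ fd n i < 2.
Proof.
move=> h; split; first by rewrite /fd mulr_gt0 // cos_ang_gt0 //; lia.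
split; first by apply: dd_root; lia.
rewrite /fd -[X in _ < X]mulr1 ltr_pM2l // cos_ang_lt1 //; lia.
Qed.

Lemma fc_props n i : (i < n.-1)%N -> 0 < fc n i /\ root (dd n + dd n.-1) (fc n i).
Proof.
move=> h; split; first by rewrite /fc mulr_gt0 // cos_ang_gt0 //; lia.
by apply: cc_root; lia.
Qed.

End S.

Theorem theorem5p2 (R : realType) :
  (forall n : nat, (2 <= n)%N ->
     roots_separated [set A : R | 0 < A /\ pn (2 * n) A = 0]
               [set A : R | 0 < A /\ pn (2 * n - 1) A = 0]
  /\ roots_separated [set A : R | 0 < A /\ pn (2 * n + 1) A = 0]
               [set A : R | 0 < A /\ A < 2 /\ pn (2 * n) A = 0])
  /\
  (forall n : nat, (1 <= n)%N ->
     exists q1 q2 : {poly R},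
       [/\ (forall A : R, pn (2 * n) A = (2 - A) * q1.[A]),
           (forall A : R, pn (2 * n - 1) A = q2.[A]),
           part_ii_props n q1 & part_ii_props n q2]).
Proof.
have pe : forall n (A : R), (1 <= n)%N -> pn (2 * n) A = (2 - A) * (dd n).[A].
  move=> n A n1; rewrite pnE; last by rewrite mul2n double_gt0.
  by rewrite mul2n PP_even !hornerE.
have po : forall n (A : R), (1 <= n)%N -> pn (2 * n - 1) A = (dd n + dd n.-1).[A].
  move=> n A; case: n => [//|n] _.
  have -> : (2 * n.+1 - 1 = n.*2.+1)%N by rewrite mul2n doubleS subn1.
  by rewrite pnE // PP_odd.
have qii1 : forall n, (1 <= n)%N -> part_ii_props n (dd n : {poly R}) /\
    (forall x : R, 0 < x -> root (dd n) x -> x \in mkseq (fd n) n.-1).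
  move=> n n1; apply: part_ii_gen.
  - exact: dd_even.
  - by rewrite dd_at0 pnatr_eq0 -lt0n.
  - by have := size_dd (R:=R) n; rewrite mul2n subn1.
  - exact: size_mkseq.
  - apply: lt_sorted_uniq; apply: sorted_mkseq => i h; apply: fd_lt; lia.
  - move=> x /mem_mkseqP [i ih ->]; have [h1 [h2 _]] := @fd_props R n i ih; by split.
have qii2 : forall n, (1 <= n)%N -> part_ii_props n (dd n + dd n.-1 : {poly R}) /\
    (forall x : R, 0 < x -> root (dd n + dd n.-1) x -> x \in mkseq (fc n) n.-1).
  move=> n n1; apply: part_ii_gen.
  - by move=> A; rewrite !hornerE !dd_even.
  - rewrite !hornerE !dd_at0 -natrD pnatr_eq0 -lt0n; lia.
  - apply: leq_trans (size_polyD _ _) _; rewrite geq_max.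
    have := size_dd (R:=R) n; have := size_dd (R:=R) n.-1.
    rewrite mul2n subn1; move: (size _) (size _) => a b; case: (n) n1 => [//|k] _ /=.
    move=> hb ha; rewrite ha /=; apply: leq_trans hb _; apply: leq_trans (leq_pred _) _; lia.
  - exact: size_mkseq.
  - apply: lt_sorted_uniq; apply: sorted_mkseq => i h; apply: fc_lt; lia.
  - move=> x /mem_mkseqP [i ih ->]; exact: (@fc_props R n i ih).
split; last first.
  move=> n n1; exists (dd n), (dd n + dd n.-1); split.
  - by move=> A; exact: pe.
  - by move=> A; exact: po.
  - exact: (qii1 n n1).1.
  - exact: (qii2 n n1).1.
move=> n n2; have n1 : (1 <= n)%N by lia.
have fdn : fd n n.-1 = 2 :> R by rewrite /fd subnn ang0 cos0 mulr1.
split.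
- exists (mkseq (fd n) n), (mkseq (fc n) n.-1); split.
  + by apply: sorted_mkseq => i h; exact: fd_lt.
  + apply: sorted_mkseq => i h; apply: fc_lt; lia.
  + split; apply/seteqP; split => x /=.
    * case=> x0; rewrite pe // => /eqP; rewrite mulf_eq0 => /orP [|rx].
        rewrite subr_eq0 => /eqP <-; apply/mem_mkseqP; exists n.-1; [lia | by rewrite fdn].
      have /mem_mkseqP [i ih ->] := (qii1 n n1).2 x x0 rx.
      apply/mem_mkseqP; exists i => //; lia.
    * move/mem_mkseqP => [i ih ->].
      have [->|ne] := eqVneq i n.-1.
        by rewrite fdn pe // subrr mul0r; split.
      have [h1 [h2 _]] := @fd_props R n i ltac:(lia).
      by split => //; rewrite pe // (eqP h2) mulr0.
    * case=> x0; rewrite po // => /eqP rx; exact: (qii2 n n1).2 x x0 rx.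
    * move/mem_mkseqP => [i ih ->]; have [h1 h2] := @fc_props R n i ih.
      by split => //; rewrite po // (eqP h2).
  + by rewrite !size_mkseq.
  + move=> i; rewrite size_mkseq => h; rewrite !nth_mkseq //; try lia.
    rewrite /fd /fc !ltr_pM2l // !cos_ang_lt //; nia.
- exists (mkseq (fc n.+1) n), (mkseq (fd n) n.-1); split.
  + apply: sorted_mkseq => i h; apply: fc_lt; lia.
  + apply: sorted_mkseq => i h; apply: fd_lt; lia.
  + have e : (2 * n + 1 = 2 * n.+1 - 1)%N by lia.
    split; apply/seteqP; split => x /=.
    * case=> x0; rewrite e po // => /eqP rx; exact: (qii2 n.+1 isT).2 x x0 rx.
    * move/mem_mkseqP => [i ih ->]; have [h1 h2] := @fc_props R n.+1 i ih.
      by split => //; rewrite e po // (eqP h2).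
    * case=> x0 [x2]; rewrite pe // => /eqP; rewrite mulf_eq0 => /orP [|rx].
        rewrite subr_eq0 => /eqP ex; by move: x2; rewrite -ex ltxx.
      exact: (qii1 n n1).2 x x0 rx.
    * move/mem_mkseqP => [i ih ->]; have [h1 [h2 h3]] := @fd_props R n i ih.
      by split => //; split => //; rewrite pe // (eqP h2) mulr0.
  + by rewrite !size_mkseq.
  + move=> i; rewrite size_mkseq => h; rewrite !nth_mkseq //; try lia.
    rewrite /fd /fc !ltr_pM2l // !cos_ang_lt //; nia.
Qed.
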